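(* Let $r\ge1$ and $t\ge0$ be integers and $\alpha\in[\frac12,\frac23]$. Let $\boldsymbol{y}'=(\frac23,\ldots,\frac23,\alpha)\in\mathbb{R}^r$ (i.e. $y'_1=\cdots=y'_{r-1}=\frac23$, $y'_r=\alpha$) and $\boldsymbol{x}'=(\alpha,\ldots,\alpha)\in\mathbb{R}^t$, and let $R(\boldsymbol{y}',\boldsymbol{x}')=A(\boldsymbol{y}',\boldsymbol{x}')/B(\boldsymbol{y}',\boldsymbol{x}')$. If $\frac23(r-1)+\alpha\le(1-\alpha)t$, then \[ R(\boldsymbol{y}',\boldsymbol{x}')\le H_1(\alpha,r,t):=\frac{3(1-\alpha)\big(3\alpha(t+1)(2r+t)+2r(r-1)\big)}{3\alpha+4r^2+(6\alpha-2)r+9(1-\alpha)\alpha t(t+1)-2}. \] Otherwise (if $\frac23(r-1)+\alpha>(1-\alpha)t$), \[ R(\boldsymbol{y}',\boldsymbol{x}')\le H_2(\alpha,r,t):=\frac{6r(r-1)+9\alpha(t+1)(2r+t)}{\big(2r+3\alpha(t+1)-2\big)\big(2r+3\alpha(t+1)+1\big)}. \]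
   Context: For $\boldsymbol{y}\in\mathbb{R}^r_{>0}$ and $\boldsymbol{x}\in[0,1]^t$, set $x_i:=0$ for $i>t$ and define $A(\boldsymbol{y},\boldsymbol{x})=\sum_{i=1}^r i\,y_i+\sum_{i=1}^t (r+i)\,x_i$. Let $\ell\in\mathbb{N}$ be the unique index with $\sum_{i=1}^{\ell-1}(1-x_i)<\sum_{i=1}^r y_i\le\sum_{i=1}^{\ell}(1-x_i)$, and $\rho:=\sum_{i=1}^r y_i-\sum_{i=1}^{\ell-1}(1-x_i)\in(0,1-x_\ell]$. Define $B(\boldsymbol{y},\boldsymbol{x})=\frac12\ell(\ell-1)+(x_\ell+\rho)\ell+\sum_{i=\ell+1}^{t} i\,x_i$ (the last sum being $0$ if $\ell\ge t$). This is the cost of the ''pseudo-packing'' with weight $1$ in bins $1,\ldots,\ell-1$, weight $x_\ell+\rho$ in bin $\ell$ and weight $x_i$ in bins $i>\ell$. *)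

(* Defs.v *)
From mathcomp Require Import all_boot all_order all_algebra.
Set Implicit Arguments. Unset Strict Implicit. Unset Printing Implicit Defensive.
Import Order.TTheory GRing.Theory Num.Theory.
Local Open Scope ring_scope.

Section PseudoPacking.
Variable R : realFieldType.

(* vectors are functions on nat; only indices 1..r (resp. 1..t) are used *)
Definition xext (t : nat) (x : nat -> R) (i : nat) : R :=
  if (1 <= i <= t)%N then x i else 0.

Definition Acost (r t : nat) (y x : nat -> R) : R :=
  \sum_(1 <= i < r.+1) i%:R * y i + \sum_(1 <= i < t.+1) (r + i)%:R * x i.

Definition ysum (r : nat) (y : nat -> R) : R := \sum_(1 <= i < r.+1) y i.

Definition cum (t : nat) (x : nat -> R) (l : nat) : R :=
  \sum_(1 <= i < l) (1 - xext t x i).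

Definition is_ell (r t : nat) (y x : nat -> R) (l : nat) : Prop :=
  (1 <= l)%N /\ cum t x l < ysum r y /\ ysum r y <= cum t x l.+1.

Definition rho (r t : nat) (y x : nat -> R) (l : nat) : R :=
  ysum r y - cum t x l.

Definition Bcost (r t : nat) (y x : nat -> R) (l : nat) : R :=
  (l * (l - 1))%:R / 2 + (xext t x l + rho r t y x l) * l%:R
  + \sum_(l.+1 <= i < t.+1) i%:R * x i.

Definition yprime (r : nat) (alpha : R) (i : nat) : R :=
  if (i < r)%N then 2 / 3 else alpha.
Definition xprime (alpha : R) (i : nat) : R := alpha.

Definition H1 (alpha : R) (r t : nat) : R :=
  (3 * (1 - alpha) * (3 * alpha * (t%:R + 1) * (2 * r%:R + t%:R)
                      + 2 * r%:R * (r%:R - 1)))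
  / (3 * alpha + 4 * r%:R ^+ 2 + (6 * alpha - 2) * r%:R
     + 9 * (1 - alpha) * alpha * t%:R * (t%:R + 1) - 2).

Definition H2 (alpha : R) (r t : nat) : R :=
  (6 * r%:R * (r%:R - 1) + 9 * alpha * (t%:R + 1) * (2 * r%:R + t%:R))
  / ((2 * r%:R + 3 * alpha * (t%:R + 1) - 2)
     * (2 * r%:R + 3 * alpha * (t%:R + 1) + 1)).

End PseudoPacking.

(* Main.v *)
Require Import Defs.
From mathcomp Require Import all_boot all_order all_algebra.
Import Order.TTheory GRing.Theory Num.Theory.
Local Open Scope ring_scope.
From mathcomp Require Import ring lra.

Section Aux.
Variable R : realFieldType.

Lemma nS (n : nat) : (n.+1)%:R = n%:R + 1 :> R.
Proof. by rewrite -addn1 natrD. Qed.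

Lemma sum_ia (a : R) n : \sum_(1 <= i < n.+1) i%:R * a = a * (n%:R * (n%:R + 1)) / 2.
Proof.
elim: n => [|n IH]; first by rewrite big_geq // !mul0r mulr0 mul0r.
rewrite big_nat_recr //= IH nS; by field.
Qed.

Lemma sum_c (c : R) n : \sum_(1 <= i < n.+1) c = n%:R * c.
Proof.
elim: n => [|n IH]; first by rewrite big_geq // mul0r.
rewrite big_nat_recr //= IH nS; ring.
Qed.

Lemma sum_ra (a : R) r t : \sum_(1 <= i < t.+1) (r + i)%:R * a
   = a * (r%:R * t%:R + t%:R * (t%:R + 1) / 2).
Proof.
elim: t => [|t IH]; first by rewrite big_geq //; ring.
rewrite big_nat_recr //= IH natrD nS; by field.
Qed.

Lemma cum_eq (a : R) t n : cum t (xprime a) n.+1 = n%:R - a * (minn n t)%:R.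
Proof.
elim: n => [|n IH]; first by rewrite /cum big_geq // minnE sub0n mulr0 subr0.
rewrite /cum big_nat_recr //= -/(cum t (xprime a) n.+1) IH /xext /xprime /=.
case: (leqP n.+1 t) => h.
  rewrite (minn_idPl (ltnW h)) nS; ring.
have h' : (t <= n)%N by []. rewrite (minn_idPr h') nS; ring.
Qed.

Lemma frac_le (A B N D : R) : 0 < B -> 0 < D -> A * D <= N * B -> A / B <= N / D.
Proof.
move=> hB hD h; rewrite ler_pdivrMr // mulrAC ler_pdivlMr //.
Qed.

End Aux.

Theorem claim3 (R : realFieldType) (r t : nat) (alpha : R) (l : nat) :
  (1 <= r)%N -> 1 / 2 <= alpha -> alpha <= 2 / 3 ->
  is_ell r t (yprime r alpha) (xprime alpha) l ->
  let Rv := Acost r t (yprime r alpha) (xprime alpha)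
            / Bcost r t (yprime r alpha) (xprime alpha) l in
  (2 / 3 * (r%:R - 1) + alpha <= (1 - alpha) * t%:R -> Rv <= H1 alpha r t) /\
  ((1 - alpha) * t%:R < 2 / 3 * (r%:R - 1) + alpha -> Rv <= H2 alpha r t).
Proof.
move=> hr ha1 ha2 [hl [hc1 hc2]]; cbv zeta.
case: r hr hc1 hc2 => [//|r'] _ hc1 hc2.
case: l hl hc1 hc2 => [//|l'] _ hc1 hc2.
have hS : ysum r'.+1 (yprime r'.+1 alpha) = r'%:R * (2/3) + alpha.
  rewrite /ysum big_nat_recr //= /yprime ltnn.
  rewrite (eq_big_nat _ _ (F2 := fun _ => 2/3)) ?sum_c // => i /andP[_ ->] //.
have hA : Acost r'.+1 t (yprime r'.+1 alpha) (xprime alpha) =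
   (2/3) * (r'%:R * (r'%:R + 1)) / 2 + (r'%:R + 1) * alpha
   + alpha * ((r'%:R + 1) * t%:R + t%:R * (t%:R + 1) / 2).
  rewrite /Acost big_nat_recr //= sum_ra /yprime ltnn /xprime nS.
  rewrite (eq_big_nat _ _ (F2 := fun i => i%:R * (2/3))) ?sum_ia //.
  by move=> i /andP[_ ->].
rewrite /ysum in hS.
rewrite hA /Bcost /rho /ysum hS cum_eq subn1 /= natrM.
rewrite /ysum hS !cum_eq in hc1 hc2.
rewrite /H1 /H2.
have hr0 : 0 <= r'%:R :> R by rewrite ler0n.
have hl0 : 0 <= l'%:R :> R by rewrite ler0n.
have ht0 : 0 <= t%:R :> R by rewrite ler0n.
case: (leqP l'.+1 t) => hlt.
  have hlt' : (l' <= t)%N by apply: ltnW.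
  rewrite (minn_idPl hlt') (minn_idPl hlt) in hc1 hc2.
  rewrite /xext /= hlt.
  have htail : \sum_(l'.+2 <= i < t.+1) i%:R * xprime alpha i =
     alpha * (t%:R * (t%:R + 1)) / 2 - alpha * (l'.+1%:R * (l'.+1%:R + 1)) / 2.
    rewrite /xprime -!sum_ia (@big_cat_nat _ _ _ l'.+2 1 t.+1) //=.
    by rewrite addrC addrK.
  rewrite htail (minn_idPl hlt') /xprime.
  have hLT : l'%:R + 1 <= t%:R :> R by rewrite -nS ler_nat.
  rewrite -[l'.+1]addn1 -[r'.+1]addn1 !natrD in hc2 *.
  move: hr0 hl0 ht0 hc1 hc2 hLT.
  move: (r'%:R) (l'%:R) (t%:R) => Rr L T hr0 hl0 ht0 hc1 hc2 hLT.
  split => hcase.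
    have hS0 : 0 < Rr * (2/3) + alpha by lra.
    have hc0 : 0 < 1 - alpha by lra.
    have hD : 0 < 3 * alpha + 4 * (Rr + 1) ^+ 2 + (6 * alpha - 2) * (Rr + 1) +
        9 * (1 - alpha) * alpha * T * (T + 1) - 2.
      have e : 3 * alpha + 4 * (Rr + 1) ^+ 2 + (6 * alpha - 2) * (Rr + 1) +
        9 * (1 - alpha) * alpha * T * (T + 1) - 2 =
        9 * ((1 - alpha) * alpha) * (T * (T + 1)) + 9 * (Rr * (2/3) + alpha) ^+ 2
        + 9 * (1 - alpha) * (Rr * (2/3) + alpha).
        by field.
      rewrite e.
      have h1 : 0 <= (1 - alpha) * alpha by apply: mulr_ge0; lra.
      have h2 : 0 <= T * (T + 1) by apply: mulr_ge0; lra.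
      have h3 : 0 <= ((1 - alpha) * alpha) * (T * (T + 1)) by apply: mulr_ge0.
      have h4 : 0 < (1 - alpha) * (Rr * (2/3) + alpha) by apply: mulr_gt0.
      have h5 : 0 <= (Rr * (2/3) + alpha) ^+ 2 by apply: sqr_ge0.
      lra.
    set A := (X in X / _ <= _).
    set B := (X in _ / X <= _).
    set N := (X in _ <= X / _).
    set D := (X in _ <= _ / X) in hD *.
    have key : 18 * (1 - alpha) * B - D =
       9 * ((Rr * (2/3) + alpha) - L * (1 - alpha)) * ((L + 1) * (1 - alpha) - (Rr * (2/3) + alpha)).
      by rewrite /B /D; field.
    have hk0 : 0 <= 9 * ((Rr * (2/3) + alpha) - L * (1 - alpha)) * ((L + 1) * (1 - alpha) - (Rr * (2/3) + alpha)).
      apply: mulr_ge0; [apply: mulr_ge0|]. all: try lra.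
    have hB0 : 0 < 18 * (1 - alpha) * B.
      rewrite -key in hk0. rewrite -[X in 0 < X](subrK D). exact: ltr_wpDl hk0 hD.
    have hB : 0 < B by move: hB0; rewrite pmulr_rgt0 //; lra.
    have hA0 : 0 <= A.
      rewrite /A.
      have h1 : 0 <= Rr * (Rr + 1) by apply: mulr_ge0; lra.
      have h2 : 0 <= T * (T + 1) by apply: mulr_ge0; lra.
      have h3 : 0 <= (Rr + 1) * T by apply: mulr_ge0; lra.
      have h4 : 0 <= (Rr + 1) * T + T * (T + 1) / 2 by lra.
      have h5 : 0 <= alpha * ((Rr + 1) * T + T * (T + 1) / 2) by apply: mulr_ge0; lra.
      have h6 : 0 <= (Rr + 1) * alpha by apply: mulr_ge0; lra.
      lra.
    apply: frac_le => //.
    have eN : N = 18 * (1 - alpha) * A by rewrite /N /A; field.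
    have h : A * D <= A * (18 * (1 - alpha) * B) by apply: ler_wpM2l => //; lra.
    by rewrite eN; move: h; rewrite mulrCA mulrA.
  have h : 0 <= (1 - alpha) * (T - (L + 1)) by apply: mulr_ge0; lra.
  exfalso; nra.
have htl : (t <= l')%N by [].
rewrite (minn_idPr htl) (minn_idPr (leqW htl)) in hc1 hc2.
rewrite /xext /= leqNgt hlt /= big_geq ?ltnS ?leqW //.
have hTL : t%:R <= l'%:R :> R by rewrite ler_nat.
rewrite (minn_idPr htl).
rewrite -[l'.+1]addn1 -[r'.+1]addn1 !natrD in hc2 *.
move: hr0 hl0 ht0 hc1 hc2 hTL.
move: (r'%:R) (l'%:R) (t%:R) => Rr L T hr0 hl0 ht0 hc1 hc2 hTL.
split => hcase.
  have h : 0 <= (1 - alpha) * (L - T) by apply: mulr_ge0; lra.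
  exfalso; nra.
have hS0 : 0 < Rr * (2/3) + alpha + alpha * T.
  have : 0 <= alpha * T by apply: mulr_ge0; lra.
  lra.
set A := (X in X / _ <= _).
set B := (X in _ / X <= _).
set N := (X in _ <= X / _).
set D := (X in _ <= _ / X).
set Tt := Rr * (2/3) + alpha + alpha * T in hS0.
have eD : D = 9 * (Tt * (Tt + 1)) by rewrite /D /Tt; field.
have hD : 0 < D by rewrite eD; apply: mulr_gt0 => //; apply: mulr_gt0; lra.
have key : 2 * B - Tt * (Tt + 1) = (L + 1 - Tt) * (Tt - L) by rewrite /B /Tt; field.
have hk0 : 0 <= (L + 1 - Tt) * (Tt - L).
  apply: mulr_ge0; rewrite /Tt; lra.
have hT2 : 0 < Tt * (Tt + 1) by apply: mulr_gt0; lra.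
have hB0 : 0 < 2 * B.
  rewrite -key in hk0. rewrite -[X in 0 < X](subrK (Tt * (Tt + 1))). exact: ltr_wpDl hk0 hT2.
have hB : 0 < B by move: hB0; rewrite pmulr_rgt0 //; lra.
have hA0 : 0 <= A.
  rewrite /A.
  have h1 : 0 <= Rr * (Rr + 1) by apply: mulr_ge0; lra.
  have h2 : 0 <= T * (T + 1) by apply: mulr_ge0; lra.
  have h3 : 0 <= (Rr + 1) * T by apply: mulr_ge0; lra.
  have h4 : 0 <= (Rr + 1) * T + T * (T + 1) / 2 by lra.
  have h5 : 0 <= alpha * ((Rr + 1) * T + T * (T + 1) / 2) by apply: mulr_ge0; lra.
  have h6 : 0 <= (Rr + 1) * alpha by apply: mulr_ge0; lra.
  lra.
apply: frac_le => //.
have eN : N = 18 * A by rewrite /N /A; field.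
have h2B : Tt * (Tt + 1) <= 2 * B by rewrite -subr_ge0 key.
have h : A * (9 * (Tt * (Tt + 1))) <= A * (9 * (2 * B)) by apply: ler_wpM2l => //; lra.
rewrite eN eD; move: h; rewrite mulrCA !mulrA.
have -> : A * 9 * 2 * B = 18 * A * B by ring.
done.
Qed.
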